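(* Let $\underline{X}$ be an observation from a distribution $P_{(\theta,\underline{\eta})}$ indexed by $(\theta,\underline{\eta})$ in a parameter space $H$, with $\theta$ a real parameter of interest, and fix $\alpha\in[0,1]$. For a confidence interval $C(\underline{X})=[L(\underline{X}),U(\underline{X})]$ for $\theta$, define its modification $C^M$ by $$T(\underline{x},\theta_0)=\min\{\theta_0-L(\underline{x}),\,U(\underline{x})-\theta_0\},\quad h(\underline{x},\theta_0)=\sup_{(\theta,\underline{\eta})\in H,\ \theta=\theta_0}P_{(\theta,\underline{\eta})}\big(T(\underline{X},\theta_0)\le T(\underline{x},\theta_0)\big),$$ $$C^M(\underline{x})=\overline{\{\theta_0: h(\underline{x},\theta_0)>\alpha\}}.$$ If $C_0(\underline{X})$ is a $1-\alpha$ exact confidence interval for $\theta$, then $C_0^M(\underline{x})\subseteq C_0(\underline{x})$ for every $\underline{x}$. Consequently, for any confidence interval $C_0(\underline{X})$ of any level, $C_0^{M2}(\underline{x})=(C_0^M)^M(\underline{x})\subseteq C_0^M(\underline{x})$ for every $\underline{x}$.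
   Context: For a set $A$ of parameter values in $\mathbb{R}$, $\overline{A}$ denotes the smallest closed simply connected set (closed interval) containing $A$. An interval $C(\underline{X})$ for $\theta$ is ''$1-\alpha$ exact'' if $\inf_{(\theta,\underline{\eta})\in H}P_{(\theta,\underline{\eta})}(\theta\in C(\underline{X}))\ge1-\alpha$. *)

(* Defs.v *)
From HB Require Import structures.
From mathcomp Require Import all_boot all_order all_algebra.
From mathcomp Require Import all_classical all_reals all_analysis measurable_realfun.
Set Implicit Arguments. Unset Strict Implicit. Unset Printing Implicit Defensive.
Import Order.TTheory GRing.Theory Num.Theory numFieldNormedType.Exports.
Local Open Scope classical_set_scope.
Local Open Scope ring_scope.
Local Open Scope ereal_scope.

Section Defs.
Context {d : measure_display} {X : measurableType d} {R : realType} {Eta : Type}.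
Variables (H : set (R * Eta)) (P : R * Eta -> probability X R) (alpha : R).

(* The closed interval C(x) = [L x, U x] (endpoints in the extended reals,
   so that unbounded and empty intervals are allowed), as a set of reals. *)
Definition ival (L U : X -> \bar R) (x : X) : set R :=
  [set t : R | L x <= t%:E <= U x].

Definition exact_ci (L U : X -> \bar R) : Prop :=
  forall p, H p -> P p [set x | ival L U x p.1]
                   >= (1 - alpha)%:E.

Definition Tstat (L U : X -> \bar R) (x : X) (theta0 : R) : \bar R :=
  mine (theta0%:E - L x) (U x - theta0%:E).

Definition hfun (L U : X -> \bar R) (x : X) (theta0 : R) : \bar R :=
  ereal_sup [set P p [set y | Tstat L U y theta0 <= Tstat L U x theta0]
            | p in [set p | H p /\ p.1 = theta0]].

Definition cl_hull (A : set R) : set R :=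
  \bigcap_(B in [set B : set R | closed B /\ is_interval B /\ A `<=` B]) B.

Definition modCI (L U : X -> \bar R) (x : X) : set R :=
  cl_hull [set theta0 | hfun L U x theta0 > alpha%:E].

Definition modL (L U : X -> \bar R) (x : X) : \bar R :=
  ereal_inf [set t%:E | t in modCI L U x].
Definition modU (L U : X -> \bar R) (x : X) : \bar R :=
  ereal_sup [set t%:E | t in modCI L U x].

End Defs.

(* Main.v *)
Require Import Defs.
From HB Require Import structures.
From mathcomp Require Import all_boot all_order all_algebra.
From mathcomp Require Import all_classical all_reals all_analysis measurable_realfun.
From mathcomp Require Import lra.
Set Implicit Arguments. Unset Strict Implicit. Unset Printing Implicit Defensive.
Import Order.TTheory GRing.Theory Num.Theory numFieldNormedType.Exports.
Local Open Scope classical_set_scope.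
Local Open Scope ring_scope.
Local Open Scope ereal_scope.


Lemma cofinal_seq (R : realType) (s : \bar R) : s != -oo ->
  exists u : nat -> \bar R, [/\ {homo u : n m / (n <= m)%N >-> n <= m},
     (forall n, u n < s) & (forall v, v < s -> exists n, v <= u n)].
Proof.
case: s => [r||] // _.
- exists (fun n => (r - n.+1%:R^-1)%:E); split.
  + move=> n m nm; rewrite lee_fin lerD2l lerN2 lef_pV2 ?posrE ?ler_nat //.
  + by move=> n; rewrite lte_fin ltrBlDr ltrDl invr_gt0.
  + case=> [r'||] //.
    * rewrite lte_fin => /ltr_add_invr [k hk]; exists k.
      by rewrite lee_fin lerBrDr ltW.
    * by move=> _; exists 0%N; rewrite leNye.
- exists (fun n => n%:R%:E); split.
  + by move=> n m nm; rewrite lee_fin ler_nat.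
  + by move=> n; rewrite ltry.
  + case=> [r'||] //.
    * move=> _; exists (Num.bound `|r'|); rewrite lee_fin.
      apply: (le_trans (ler_norm r')); apply: ltW; exact: archi_boundP.
    * by move=> _; exists 0%N; rewrite leNye.
Qed.



Section pv.
Context {d : measure_display} {X : measurableType d} {R : realType}.

Lemma pval (T : X -> \bar R) (mT : measurable_fun setT T) (P : probability X R)
  (a : R) : (0 <= a)%R ->
  let B := [set y | P [set z | T z <= T y] <= a%:E] in
  measurable B /\ P B <= a%:E.
Proof.
move=> a0 B.
have mle c : measurable [set z | T z <= c].
  rewrite -[X in measurable X]setTI.
  exact: (measurable_lee measurableT mT (measurable_cst c)).
have down y z : B y -> T z <= T y -> B z.
  move=> By zy; apply: le_trans By; apply: le_measure; rewrite ?inE //.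
  by move=> w /= wz; apply: le_trans zy.
have [B0|/set0P[y0 By0]] := eqVneq B set0.
  by rewrite B0; split; [exact: measurable0|rewrite measure0 lee_fin].
have [[y1 [By1 max1]]|nomax] :=
  pselect (exists y1, B y1 /\ forall y, B y -> T y <= T y1).
  have BE : B = [set z | T z <= T y1].
    by apply/seteqP; split => z; [move/max1 | move/(down _ _ By1)].
  by rewrite BE; split; [exact: mle | exact: By1].
have nm y : B y -> exists2 y', B y' & T y < T y'.
  move=> By; apply: contra_notP nomax => h; exists y; split => // z Bz.
  rewrite leNgt; apply/negP => lt; apply: h; exists z => //.
pose s := ereal_sup (T @` B).
have lts y : B y -> T y < s.
  move=> /nm [y' By' lt]; apply: (lt_le_trans lt); apply: ereal_sup_ubound.
  by exists y'.
have sNy : s != -oo by rewrite gt_eqF // (le_lt_trans (leNye (T y0)) (lts _ By0)).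
have [u [ndu ltu cofu]] := cofinal_seq sNy.
pose F n := [set z | T z <= u n].
have FB' n : exists2 y, B y & F n `<=` [set z | T z <= T y].
  have [w [y By <-] lt] := ereal_sup_gt (ltu n).
  by exists y => // z Fz; apply: le_trans Fz (ltW lt).
have BE : B = \bigcup_n F n.
  apply/seteqP; split => z.
    by move=> /lts /cofu [n hn]; exists n.
  by move=> [n _ Fz]; have [y By /(_ _ Fz) zy] := FB' n; exact: down By zy.
have mF n : measurable (F n) by exact: mle.
have mU : measurable (\bigcup_n F n) by exact: bigcupT_measurable.
rewrite BE; split => //.
have ndF : nondecreasing_seq F.
  by move=> n m nm0; apply/subsetPset => z /= Fz; apply: le_trans Fz (ndu _ _ nm0).
have cv := nondecreasing_cvg_mu (mu:=P) mF mU ndF.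
rewrite -(cvg_lim _ cv) //; apply: lime_le; first by apply/cvg_ex; eexists; exact: cv.
apply: nearW => n /=; have [y By Fy] := FB' n.
by apply: le_trans By; apply: le_measure; rewrite ?inE.
Qed.
End pv.


Section hull.
Context {R : realType}.

Lemma hull_closed (A : set R) : closed (cl_hull A).
Proof. by apply: closed_bigI => B [cB _]. Qed.

Lemma hull_itv (A : set R) : is_interval (cl_hull A).
Proof.
move=> a b ha hb z hz B [cB [iB AB]].
exact: (iB a b (ha B (conj cB (conj iB AB))) (hb B (conj cB (conj iB AB))) z hz).
Qed.

Lemma sub_hull (A : set R) : A `<=` cl_hull A.
Proof. by move=> a Aa B [_ [_ AB]]; exact: AB. Qed.

Lemma hull_sub (A B : set R) : closed B -> is_interval B -> A `<=` B ->
  cl_hull A `<=` B.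
Proof. by move=> cB iB AB z hz; exact: hz B (conj cB (conj iB AB)). Qed.

Lemma closed_inf_mem (K : set R) (t : R) : closed K ->
  ereal_inf [set x%:E | x in K] = t%:E -> K t.
Proof.
move=> cK it.
have K0 : K !=set0.
  apply/set0P/negP => /eqP K0; move: it; rewrite K0 image_set0 ereal_inf0.
  by [].
apply: (itv_closed_infimums K0 cK); split.
  by move=> k Kk; rewrite -lee_fin -it; apply: ereal_inf_lbound; exists k.
by move=> y ly; rewrite -lee_fin -it; apply: le_ereal_inf_tmp => _ [k Kk <-]; rewrite lee_fin; exact: ly.
Qed.

Lemma closed_sup_mem (K : set R) (t : R) : closed K ->
  ereal_sup [set x%:E | x in K] = t%:E -> K t.
Proof.
move=> cK it.
have K0 : K !=set0.
  apply/set0P/negP => /eqP K0; move: it; rewrite K0 image_set0 ereal_sup0.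
  by [].
apply: (itv_closed_supremums K0 cK); split.
  by move=> k Kk; rewrite -lee_fin -it; apply: ereal_sup_ubound; exists k.
by move=> y ly; rewrite -lee_fin -it; apply: ge_ereal_sup => _ [k Kk <-]; rewrite lee_fin; exact: ly.
Qed.

Lemma endpoints_sub (K : set R) : closed K -> is_interval K ->
  [set t | ereal_inf [set x%:E | x in K] <= t%:E <= ereal_sup [set x%:E | x in K]]
  `<=` K.
Proof.
move=> cK iK t /andP[it ts].
move: it; rewrite le_eqVlt => /orP[/eqP it|it]; first exact: closed_inf_mem it.
move: ts; rewrite le_eqVlt => /orP[/eqP ts|ts]; first exact: closed_sup_mem (esym ts).
have [_ [a Ka <-] at'] := ereal_inf_lt it.
have [_ [b Kb <-] tb] := ereal_sup_gt ts.
by apply: (iK a b Ka Kb); rewrite -!lee_fin !ltW.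
Qed.

End hull.



Section main.
Context {d : measure_display} {X : measurableType d} {R : realType} {Eta : Type}.
Variables (H : set (R * Eta)) (P : R * Eta -> probability X R) (alpha : R).

Lemma ival_closed (L U : X -> \bar R) x : closed (ival L U x).
Proof.
have -> : ival L U x = [set t | L x <= t%:E] `&` [set t | t%:E <= U x].
  by apply/seteqP; split => t /=; [move=> /andP[a b] | move=> [a b]; apply/andP].
apply: closedI.
- case: (L x) => [r||].
  + have -> : [set t : R | r%:E <= t%:E] = [set t : R | r <= t]%R.
      by apply/seteqP; split => t /=; rewrite lee_fin.
    exact: closed_ge.
  + apply: (eq_ind set0); first exact: closed0.
    by apply/seteqP; split => // t /=; rewrite leNgt ltey.
  + apply: (eq_ind setT); first exact: closedT.
    by apply/seteqP; split => // t _ /=; rewrite leNye.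
- case: (U x) => [r||].
  + have -> : [set t : R | t%:E <= r%:E] = [set t : R | t <= r]%R.
      by apply/seteqP; split => t /=; rewrite lee_fin.
    exact: closed_le.
  + apply: (eq_ind setT); first exact: closedT.
    by apply/seteqP; split => // t _ /=; rewrite leey.
  + apply: (eq_ind set0); first exact: closed0.
    by apply/seteqP; split => // t /=; rewrite leNgt ltNye.
Qed.

Lemma ival_itv (L U : X -> \bar R) x : is_interval (ival L U x).
Proof.
move=> a b /andP[La _] /andP[_ Ub] z /andP[az zb]; apply/andP; split.
  by apply: le_trans La _; rewrite lee_fin.
by apply: le_trans Ub; rewrite lee_fin.
Qed.

Lemma Tstat_ge0 (L U : X -> \bar R) y t :
  (0 <= Tstat L U y t) = (L y <= t%:E <= U y).
Proof. rewrite /Tstat le_min !sube_ge0 //; try by rewrite orbT. Qed.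

Lemma Tstat_meas (L U : X -> \bar R) t :
  measurable_fun setT L -> measurable_fun setT U ->
  measurable_fun setT (fun y => Tstat L U y t).
Proof.
move=> mL mU; apply: measurable_mine.
  exact: (emeasurable_funB (measurable_cst _) mL).
exact: (emeasurable_funB mU (measurable_cst _)).
Qed.

Lemma ival_meas (L U : X -> \bar R) t :
  measurable_fun setT L -> measurable_fun setT U ->
  measurable [set y | ival L U y t].
Proof.
move=> mL mU.
have -> : [set y | ival L U y t] = [set y | 0 <= Tstat L U y t].
  by apply/seteqP; split => y /=; rewrite Tstat_ge0.
rewrite -[X in measurable X]setTI.
exact: (measurable_lee measurableT (measurable_cst _) (Tstat_meas t mL mU)).
Qed.

Lemma compl_bound (Q : probability X R) (C : set X) : measurable C ->
  (1 - alpha)%:E <= Q C -> Q (~` C) <= alpha%:E.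
Proof.
move=> mC hC; rewrite probability_setC //.
have f : Q C \is a fin_num.
  by rewrite ge0_fin_numE ?measure_ge0 // (le_lt_trans (probability_le1 Q mC)) ?ltry.
move: hC; rewrite -(fineK f) !lee_fin. lra.
Qed.

Lemma part1 (L U : X -> \bar R) : measurable_fun setT L -> measurable_fun setT U ->
  exact_ci H P alpha L U -> forall x, modCI H P alpha L U x `<=` ival L U x.
Proof.
move=> mL mU ex x; apply: hull_sub; [exact: ival_closed|exact: ival_itv|].
move=> t /= ht; apply: contrapT => nI; move: ht; apply/negP; rewrite -leNgt.
apply: ge_ereal_sup => _ [p [Hp p1] <-].
have Tx : Tstat L U x t < 0 by rewrite ltNge Tstat_ge0; exact/negP.
have mC := ival_meas p.1 mL mU.
apply: le_trans (compl_bound mC (ex p Hp)).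
apply: le_measure; rewrite ?inE //; last first.
  move=> y /= Ty; rewrite /ival /= -Tstat_ge0 p1 => Iy.
  by have := le_lt_trans (le_trans Iy Ty) Tx; rewrite ltxx.
  by apply: measurableC.
rewrite -[X in measurable X]setTI.
exact: (measurable_lee measurableT (Tstat_meas t mL mU) (measurable_cst _)).
Qed.

Lemma compl_bound2 (Q : probability X R) (C : set X) : measurable C ->
  Q (~` C) <= alpha%:E -> (1 - alpha)%:E <= Q C.
Proof.
move=> mC; rewrite probability_setC //.
have f : Q C \is a fin_num.
  by rewrite ge0_fin_numE ?measure_ge0 // (le_lt_trans (probability_le1 Q mC)) ?ltry.
rewrite -(fineK f) !lee_fin; lra.
Qed.

Lemma modCI_sub_ival (L U : X -> \bar R) x :
  modCI H P alpha L U x `<=` ival (modL H P alpha L U) (modU H P alpha L U) x.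
Proof.
move=> t ht; apply/andP; split.
  by apply: ereal_inf_lbound; exists t.
by apply: ereal_sup_ubound; exists t.
Qed.

Lemma ival_sub_modCI (L U : X -> \bar R) x :
  ival (modL H P alpha L U) (modU H P alpha L U) x `<=` modCI H P alpha L U x.
Proof.
move=> t ht.
have := @endpoints_sub R (modCI H P alpha L U x) (@hull_closed R _) (@hull_itv R _).
by apply; exact: ht.
Qed.

Lemma exact_mod (L U : X -> \bar R) : (0 <= alpha)%R ->
  measurable_fun setT L -> measurable_fun setT U ->
  measurable_fun setT (modL H P alpha L U) ->
  measurable_fun setT (modU H P alpha L U) ->
  exact_ci H P alpha (modL H P alpha L U) (modU H P alpha L U).
Proof.
move=> ha0 mL mU mmL mmU p Hp.
have mC := ival_meas p.1 mmL mmU.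
apply: compl_bound2 => //.
have [mB PB] := pval (Tstat_meas p.1 mL mU) (P p) ha0.
apply: le_trans PB; apply: le_measure; rewrite ?inE //; first exact: measurableC.
move=> y /= nC.
have nh : ~ (alpha%:E < hfun H P L U y p.1).
  by move=> h; apply: nC; apply: modCI_sub_ival; apply: sub_hull.
move/negP: nh; rewrite -leNgt; apply: le_trans.
by apply: ereal_sup_ubound; exists p.
Qed.

End main.

Local Close Scope ereal_scope.
Unset Implicit Arguments.
Set Strict Implicit.

Theorem theorem2 (d : measure_display) (X : measurableType d) (R : realType)
  (Eta : Type) (H : set (R * Eta)) (P : R * Eta -> probability X R)
  (alpha : R) (ha0 : 0 <= alpha) (ha1 : alpha <= 1) :
  (forall L U : X -> \bar R,
     measurable_fun [set: X] L -> measurable_fun [set: X] U ->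
     exact_ci H P alpha L U ->
     forall x, modCI H P alpha L U x `<=` ival L U x)
  /\
  (forall L U : X -> \bar R,
     measurable_fun [set: X] L -> measurable_fun [set: X] U ->
     measurable_fun [set: X] (modL H P alpha L U) ->
     measurable_fun [set: X] (modU H P alpha L U) ->
     forall x, modCI H P alpha (modL H P alpha L U) (modU H P alpha L U) x
               `<=` modCI H P alpha L U x).
Proof.
split; first exact: part1.
move=> L U mL mU mmL mmU x.
move=> t ht; apply: ival_sub_modCI.
exact: (part1 mmL mmU (exact_mod ha0 mL mU mmL mmU) ht).
Qed.
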